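(* Let $\Omega>0$, let $0<\sigma\leq m_{\min}$ and let $n\geq 2$ be an integer. Then there exist a positive discrete measure $\mu=\sum_{j=1}^{n}a_j\delta_{y_j}$ on $\mathbb R$ with $n$ distinct supports $y_1,\dots,y_n\in\mathbb R$ and amplitudes $a_j>0$, and a positive discrete measure $\hat \mu=\sum_{j=1}^{n-1}\hat a_j \delta_{\hat y_j}$ with $n-1$ supports $\hat y_j\in\mathbb R$ and amplitudes $\hat a_j>0$, such that \[ \max_{\omega\in[-\Omega,\Omega]}\big|\mathcal F[\hat \mu](\omega)-\mathcal F [\mu](\omega)\big|< \sigma, \] and moreover \[ \min_{1\leq j\leq n}|a_j|= m_{\min}, \qquad \min_{p\neq j}|y_p-y_j|= \frac{2e^{-1}}{\Omega}\Big(\frac{\sigma}{m_{\min}}\Big)^{\frac{1}{2n-2}}. \]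
   Context: For a discrete measure $\nu=\sum_{j} c_j\delta_{x_j}$ on $\mathbb R$, its Fourier transform is $\mathcal F[\nu](\omega)=\sum_j c_j e^{i x_j\omega}$, $\omega\in\mathbb R$. Here $\Omega>0$ is the cutoff frequency, $\sigma>0$ the noise level and $m_{\min}>0$ a prescribed minimal amplitude. *)

(* Defs.v *)
From HB Require Import structures.
From mathcomp Require Import all_boot all_order all_algebra.
From mathcomp Require Import reals trigo.
From mathcomp.real_closed Require Import complex.
Set Implicit Arguments. Unset Strict Implicit. Unset Printing Implicit Defensive.
Import Order.TTheory GRing.Theory Num.Theory.
Local Open Scope ring_scope.
Local Open Scope complex_scope.

Definition expi {R : realType} (t : R) : R[i] := cos t +i* sin t.

(* Fourier transform of the discrete measure  sum_{j<k} c_j delta_{x_j}: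
   F[nu](w) = sum_j c_j e^{i x_j w}. *)
Definition fourier {R : realType} {k : nat} (c x : 'I_k -> R) (w : R) : R[i] :=
  \sum_(j < k) (c j)%:C * expi (x j * w).

(* Main.v *)
Require Import Defs.
From HB Require Import structures.
From mathcomp Require Import all_boot all_order all_algebra.
From mathcomp Require Import reals.
From mathcomp.analysis Require Import sequences exp trigo derive realfun.
From mathcomp Require Import classical_sets topology normedtype.
From mathcomp.real_closed Require Import complex.
From mathcomp Require Import ring lra zify.
Import Order.TTheory GRing.Theory Num.Theory.
Import numFieldNormedType.Exports.
Local Open Scope ring_scope.
Local Open Scope complex_scope.
Local Open Scope classical_set_scope.

Lemma sin_le_pos (R : realType) (x : R) : 0 < x -> `|sin x| <= x.
Proof.
move=> x0.
have [|c _ hc] := @MVT R sin cos 0 x x0 (fun y _ => is_derive_sin y).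
  exact/continuous_subspaceT/continuous_sin.
move: hc; rewrite sin0 subr0 subr0 => ->.
rewrite normrM (gtr0_norm x0) ler_piMl ?(ltW x0) //; exact: cos_max.
Qed.

Lemma sin_le_abs (R : realType) (x : R) : `|sin x| <= `|x|.
Proof.
have [x0|x0|->] := ltgtP x 0; last by rewrite sin0 normr0.
- rewrite -normrN -sinN (ltr0_norm x0); apply: sin_le_pos; by rewrite oppr_gt0.
- by rewrite (gtr0_norm x0) sin_le_pos.
Qed.

Lemma one_sub_expi {R : realType} (t : R) : `|1 - expi t| <= (`|t|)%:C.
Proof.
rewrite normc_def /= lecR -sqrtr_sqr ler_sqrt ?sqr_ge0 //.
set s := sin (t / 2).
have hc : cos t = 1 - 2 * s ^+ 2.
  have -> : t = (t / 2) *+ 2 by rewrite -mulr_natr divfK // pnatr_eq0.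
  by rewrite cos_mulr2n cos2sin2 /s mulr2n; lra.
have hs : s ^+ 2 <= (t / 2) ^+ 2.
  rewrite -(real_normK (num_real s)) -(real_normK (num_real (t / 2))).
  rewrite ler_sqr ?nnegrE //; exact: sin_le_abs.
have h2 := sin2cos2 t.
nra.
Qed.

Lemma expiD (R : realType) (a b : R) : expi (a + b) = expi a * expi b.
Proof. rewrite /expi cosD sinD; simpc; congr (_ +i* _); ring. Qed.

Lemma expi0 (R : realType) : expi (0 : R) = 1.
Proof. by rewrite /expi cos0 sin0. Qed.

Lemma expiMn (R : realType) (k : nat) (t : R) : expi (k%:R * t) = expi t ^+ k.
Proof.
elim: k => [|k IH]; first by rewrite mul0r expi0 expr0.
by rewrite -addn1 natrD mulrDl mul1r expiD IH exprD expr1.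
Qed.

Lemma sum_split (V : nmodType) (F : nat -> V) (k : nat) :
  \sum_(i < k.*2.+1) F i = \sum_(j < k.+1) F j.*2 + \sum_(j < k) F j.*2.+1.
Proof.
elim: k => [|k IH]; first by rewrite !big_ord_recr !big_ord0 /= !add0r addr0.
rewrite doubleS (big_ord_recr k.*2.+2) (big_ord_recr k.*2.+1) /= IH.
rewrite (big_ord_recr k.+1) (big_ord_recr k) /= doubleS.
rewrite [in RHS]big_ord_recr /=.
by rewrite -!addrA; do 2 congr (_ + _); rewrite [RHS]addrC -addrA.
Qed.

Lemma key (R : realType) (m d w : R) (k : nat) :
  fourier (fun j : 'I_k.+1 => m * 'C(k.+1.*2, j.*2.+1)%:R)
          (fun j => (j.*2.+1)%:R * (d / 2)) w
  - fourier (fun j : 'I_k.+2 => m * 'C(k.+1.*2, j.*2)%:R) (fun j => j%:R * d) w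
  = - (m%:C * (1 - expi (d / 2 * w)) ^+ k.+1.*2).
Proof.
set z := expi (d / 2 * w).
rewrite exprBn.
rewrite (@sum_split _ (fun i => (-1) ^+ i * 1 ^+ (k.+1.*2 - i) * z ^+ i *+ 'C(k.+1.*2, i))).
rewrite mulrDr opprD addrC /fourier; congr (_ + _); first congr (- _).
- rewrite mulr_sumr; apply: eq_bigr => j _.
  have -> : j%:R * d * w = (j.*2)%:R * (d / 2 * w).
    by rewrite -muln2 natrM; field.
  rewrite expiMn -signr_odd odd_double expr0 expr1n mul1r /= rmorphM rmorph_nat.
  rewrite -mulr_natr; ring.
- rewrite mulr_sumr -sumrN; apply: eq_bigr => j _.
  rewrite -mulrA expiMn -signr_odd /= odd_double expr1n mulr1 /= rmorphM rmorph_nat.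
  rewrite -mulr_natr; ring.
Qed.

Theorem theorem2p2 (R : realType) (Omega sigma m_min : R) (n : nat)
    (hOmega : 0 < Omega) (hsigma : 0 < sigma) (hsm : sigma <= m_min)
    (hn : (2 <= n)%N) :
  exists (a y : 'I_n -> R) (ah yh : 'I_n.-1 -> R),
    [/\ injective y /\ (forall j, 0 < a j),
        (forall j, 0 < ah j),
        (forall w : R, - Omega <= w <= Omega ->
           `| fourier ah yh w - fourier a y w | < sigma%:C),
        ((forall j, m_min <= `|a j|) /\ (exists j, `|a j| = m_min)) &
        (let d := (2 * expR (-1)) / Omega
                  * powR (sigma / m_min) (1 / (2 * n%:R - 2)) in
         (forall p j : 'I_n, p != j -> d <= `|y p - y j|) /\
         (exists p j : 'I_n, p != j /\ `|y p - y j| = d))].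
Proof.
case: n hn => [|[|k]] // _.
have m0 : 0 < m_min by apply: lt_le_trans hsm.
set P := powR (sigma / m_min) (1 / (2 * (k.+2)%:R - 2)).
set d := 2 * expR (-1) / Omega * P.
have P0 : 0 < P by apply: powR_gt0; apply: divr_gt0.
have d0 : 0 < d by rewrite /d !mulr_gt0 ?invr_gt0 ?expR_gt0.
have hN : 2 * (k.+2)%:R - 2 = (k.+1.*2)%:R :> R.
  by rewrite -muln2 -[k.+2]addn2 -[k.+1]addn1 !natrM !natrD; ring.
have PN : P ^+ k.+1.*2 = sigma / m_min.
  rewrite /P hN -powR_mulrn ?powR_ge0 // -powRrM div1r mulVf ?pnatr_eq0 //.
  by rewrite powRr1 // divr_ge0 // ltW.
exists (fun j => m_min * 'C(k.+1.*2, j.*2)%:R), (fun j => j%:R * d),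
  (fun j => m_min * 'C(k.+1.*2, j.*2.+1)%:R), (fun j => (j.*2.+1)%:R * (d / 2)).
split.
- split.
  + move=> i j /= h; apply/val_inj/eqP; rewrite -(eqr_nat R).
    by rewrite -(inj_eq (mulIf (lt0r_neq0 d0))) h.
  + move=> j; rewrite mulr_gt0 // ltr0n bin_gt0 leq_double -ltnS; exact: ltn_ord.
- move=> j; rewrite mulr_gt0 // ltr0n bin_gt0.
  have := ltn_ord j; rewrite doubleS; lia.
- move=> w hw; rewrite key normrN normrM normrX ger0_norm ?ler0c ?ltW //.
  have hle : `|1 - expi (d / 2 * w)| ^+ k.+1.*2 <= (d / 2 * Omega)%:C ^+ k.+1.*2.
    have dO : 0 <= d / 2 * Omega by rewrite mulr_ge0 ?divr_ge0 // ltW.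
    apply: lerXn2r; [by rewrite nnegrE normr_ge0 | by rewrite nnegrE ler0c | ].
    apply: le_trans (one_sub_expi (d / 2 * w)) _; rewrite lecR normrM (ger0_norm (divr_ge0 (ltW d0) _)) //.
    by rewrite ler_pM2l ?divr_gt0 // ler_norml.
  apply: le_lt_trans; first by apply: ler_wpM2l hle; rewrite ler0c ltW.
  rewrite -rmorphXn -rmorphM ltcR.
  have -> : d / 2 * Omega = expR (-1) * P by rewrite /d; field; rewrite lt0r_neq0.
  rewrite exprMn PN.
  have -> : m_min * (expR (-1) ^+ k.+1.*2 * (sigma / m_min)) = expR (-1) ^+ k.+1.*2 * sigma.
    by field; rewrite lt0r_neq0.
  by rewrite gtr_pMl // exprn_ilt1 ?expR_ge0 ?expR_lt1 ?ltrN10.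
- split.
  + move=> j; rewrite ger0_norm; last by rewrite mulr_ge0 // (ltW m0).
    apply: ler_peMr; first exact: (ltW m0).
    by rewrite ler1n bin_gt0 leq_double -ltnS; exact: ltn_ord.
  + by exists ord0; rewrite /= bin0 mulr1 ger0_norm // (ltW m0).
- move=> d1; rewrite /d1; split.
  + move=> p j pj; rewrite -mulrBl normrM (gtr0_norm d0); apply: ler_peMl; first exact: (ltW d0).
    case: (ltngtP p j) => h; last by move: pj; rewrite (val_inj h) eqxx.
    * by rewrite distrC -natrB ?(ltnW h) // normr_nat ler1n subn_gt0.
    * by rewrite -natrB ?(ltnW h) // normr_nat ler1n subn_gt0.
  + exists ord0, (Ordinal (isT : (1 < k.+2)%N)); split => //=.
    by rewrite mul0r mul1r sub0r normrN gtr0_norm.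
Qed.
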